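(* Let $n\ge2$ and let $\mathcal{M}\subseteq\mathbb{R}^{n\times n}$ be path-connected. Suppose that for each $M\in\mathcal{M}$ both $M$ and $M^{[2]}$ are nonsingular, and that $\mathcal{M}$ contains a positive stable (resp. Hurwitz) matrix. Then every matrix in $\mathcal{M}$ is positive stable (resp. Hurwitz).
   Context: A real square matrix is positive stable if all its eigenvalues have positive real part, and Hurwitz if all its eigenvalues have negative real part. $\mathbb{R}^{n\times n}$ carries the Euclidean topology. For $M\in\mathbb{R}^{n\times n}$, $M^{[2]}$ is the second additive compound: the matrix of $u\wedge v\mapsto Mu\wedge v+u\wedge Mv$ on $\Lambda^2\mathbb{R}^n$ with respect to the basis $e_i\wedge e_j$ ($i<j$). *)

(* Defs.v *)
From HB Require Import structures.
From mathcomp Require Import all_boot all_order all_algebra.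
From mathcomp Require Import all_classical all_reals all_analysis.
From mathcomp Require Import complex.
Set Implicit Arguments. Unset Strict Implicit. Unset Printing Implicit Defensive.
Import Order.TTheory GRing.Theory Num.Theory numFieldNormedType.Exports.
Local Open Scope classical_set_scope.
Local Open Scope ring_scope.

Definition path_connected (R : realType) (n : nat) (S : set 'M[R]_n) : Prop :=
  forall A B : 'M[R]_n, S A -> S B ->
    exists g : R -> 'M[R]_n,
      {within `[0%R, 1%R], continuous g} /\ g 0 = A /\ g 1 = B /\
      (forall t : R, t \in `[0%R, 1%R] -> S (g t)).

Definition cmx (R : realType) (n : nat) (M : 'M[R]_n) : 'M[R[i]]_n :=
  map_mx (fun x : R => Complex x 0) M.

Definition positive_stable (R : realType) (n : nat) (M : 'M[R]_n) : Prop :=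
  forall z : R[i], eigenvalue (cmx M) z -> 0 < complex.Re z.

Definition hurwitz (R : realType) (n : nat) (M : 'M[R]_n) : Prop :=
  forall z : R[i], eigenvalue (cmx M) z -> complex.Re z < 0.

(* Index set of the basis e_i /\ e_j, i < j, of Lambda^2 R^n
   (enumerated lexicographically). *)
Definition wpairs (n : nat) := {p : 'I_n * 'I_n | (p.1 < p.2)%N}.

(* coefficient of e_i /\ e_j (i<j) in e_p /\ e_q *)
Definition wcoef {R : nzRingType} (n : nat) (p q : 'I_n) (ij : wpairs n) : R :=
  ((p == (val ij).1) && (q == (val ij).2))%:R
  - ((p == (val ij).2) && (q == (val ij).1))%:R.

(* entry (ij, kl) of M^[2]: coefficient of e_i/\e_j in
   M e_k /\ e_l + e_k /\ M e_l *)
Definition compound2_entry {R : nzRingType} (n : nat) (M : 'M[R]_n)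
    (ij kl : wpairs n) : R :=
  \sum_(p < n) M p (val kl).1 * wcoef p (val kl).2 ij
  + \sum_(q < n) M q (val kl).2 * wcoef (val kl).1 q ij.

Definition compound2 {R : nzRingType} (n : nat) (M : 'M[R]_n)
  : 'M[R]_(#|{: wpairs n}|) :=
  \matrix_(a, b) compound2_entry M (enum_val a) (enum_val b).

(* Main.v *)
From HB Require Import structures.
From mathcomp Require Import all_boot all_order all_algebra.
From mathcomp Require Import all_classical all_reals all_analysis.
From mathcomp Require Import complex.
From mathcomp Require Import ring lra.
From mathcomp Require Import perm.
Require Import Defs.
Import Order.TTheory GRing.Theory Num.Theory numFieldNormedType.Exports.
Local Open Scope classical_set_scope.
Local Open Scope ring_scope.

Section Alg.
Variable F : closedFieldType.

Lemma char_poly_horner n (A : 'M[F]_n) z :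
  (char_poly A).[z] = \det (z%:M - A).
Proof.
rewrite /char_poly -horner_evalE -det_map_mx; congr (\det _).
apply/matrixP => i j; rewrite !mxE /horner_evalE /=.
by rewrite horner_evalE hornerD hornerN hornerMn hornerX hornerC.
Qed.

Lemma char_fact n (A : 'M[F]_n) : exists rs : seq F,
  [/\ size rs = n, (forall r, r \in rs -> eigenvalue A r) &
   forall z, \det (z%:M - A) = \prod_(r <- rs) (z - r)].
Proof.
have [rs Hrs] := closed_field_poly_normal (char_poly A).
have hl : lead_coef (char_poly A) = 1 by apply/monicP/char_poly_monic.
rewrite hl scale1r in Hrs.
exists rs; split.
- have := size_char_poly A; rewrite Hrs size_prod_XsubC; by case.
- move=> r rin; rewrite eigenvalue_root_char /root Hrs horner_prod.
  by rewrite prodf_seq_eq0; apply/hasP; exists r; rewrite // hornerXsubC subrr eqxx.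
- move=> z; rewrite -char_poly_horner Hrs horner_prod.
  by apply: eq_bigr => r _; rewrite hornerXsubC.
Qed.

Lemma eig_det n (A : 'M[F]_n) z : eigenvalue A z -> \det (z%:M - A) = 0.
Proof. by rewrite eigenvalue_root_char /root char_poly_horner => /eqP. Qed.
End Alg.

Section Wedge.
Variable F : fieldType.
Variable n : nat.

Lemma pick_pair (Z : 'I_n -> 'I_n -> F) p q :
  \sum_(ij : wpairs n) Z (val ij).1 (val ij).2 *
     ((p == (val ij).1) && (q == (val ij).2))%:R = if (p < q)%N then Z p q else 0.
Proof.
case: ltnP => h.
  rewrite (bigD1 (exist _ (p, q) h)) //= !eqxx /= mulr1 big1 ?addr0 // => -[[a b] hab] /= neq.
  case: (eqVneq p a) => [e1|]; case: (eqVneq q b) => [e2|] /=; rewrite ?mulr0 //.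
  exfalso; move/negP: neq; apply; apply/eqP/val_inj => /=.
  by rewrite e1 e2.
apply: big1 => -[[a b] hab] _ /=.
case: (eqVneq p a) => [e1|]; case: (eqVneq q b) => [e2|] /=; rewrite ?mulr0 //.
exfalso; move: hab; rewrite -e1 -e2 => hh.
by move: (leq_ltn_trans h hh); rewrite ltnn.
Qed.

Definition Yw (v w : 'rV[F]_n) (p q : 'I_n) := v ord0 p * w ord0 q - v ord0 q * w ord0 p.

Definition xw (v w : 'rV[F]_n) : 'rV[F]_#|{: wpairs n}| :=
  \row_a Yw v w (val (enum_val a)).1 (val (enum_val a)).2.

Lemma sum_xw (v w : 'rV[F]_n) p q :
  \sum_(a < #|{: wpairs n}|) Yw v w (val (enum_val a)).1 (val (enum_val a)).2 * wcoef p q (enum_val a) = Yw v w p q.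
Proof.
pose G (ij : wpairs n) := Yw v w (val ij).1 (val ij).2 * wcoef p q ij.
rewrite (eq_bigr (fun a => G (enum_val a))) //.
rewrite -big_enum_val /= /G /wcoef.
under eq_bigr do rewrite mulrBr.
rewrite sumrB pick_pair.
under eq_bigr do rewrite andbC.
rewrite pick_pair /Yw.
case: ltngtP => h.
- by rewrite subr0.
- by rewrite sub0r opprB.
- by move/val_inj: h => ->; rewrite !subrr.
Qed.

Lemma rowE (A : 'M[F]_n) (v : 'rV[F]_n) a k : v *m A = a *: v ->
  \sum_p v ord0 p * A p k = a * v ord0 k.
Proof. by move=> h; have := congr1 (fun M : 'rV[F]_n => M ord0 k) h; rewrite !mxE. Qed.

Lemma S1 (A : 'M[F]_n) (v w : 'rV[F]_n) a b c d : v *m A = a *: v -> w *m A = b *: w ->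
  \sum_p A p c * Yw v w p d = w ord0 d * (a * v ord0 c) - v ord0 d * (b * w ord0 c).
Proof.
move=> /rowE hv /rowE hw; rewrite -hv -hw mulr_sumr mulr_sumr -sumrB.
by apply: eq_bigr => p _; rewrite /Yw; ring.
Qed.

Lemma S2 (A : 'M[F]_n) (v w : 'rV[F]_n) a b c d : v *m A = a *: v -> w *m A = b *: w ->
  \sum_q A q d * Yw v w c q = v ord0 c * (b * w ord0 d) - w ord0 c * (a * v ord0 d).
Proof.
move=> /rowE hv /rowE hw; rewrite -hv -hw mulr_sumr mulr_sumr -sumrB.
by apply: eq_bigr => p _; rewrite /Yw; ring.
Qed.

Lemma xw_eig (A : 'M[F]_n) (v w : 'rV[F]_n) a b : v *m A = a *: v -> w *m A = b *: w ->
  xw v w *m compound2 A = (a + b) *: xw v w.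
Proof.
move=> hv hw; apply/rowP => k; rewrite !mxE.
rewrite /compound2; under eq_bigr do rewrite !mxE /compound2_entry mulrDr mulr_sumr mulr_sumr.
rewrite big_split /= exchange_big /= [X in _ + X]exchange_big /=.
under eq_bigr do (under eq_bigr do rewrite mulrCA; rewrite -mulr_sumr sum_xw).
under [X in _ + X]eq_bigr do (under eq_bigr do rewrite mulrCA; rewrite -mulr_sumr sum_xw).
rewrite (S1 _ _ _ _ _ _ _ hv hw) (S2 _ _ _ _ _ _ _ hv hw) /Yw; ring.
Qed.

Lemma xw_neq0 (A : 'M[F]_n) (v w : 'rV[F]_n) a b : v *m A = a *: v -> w *m A = b *: w ->
  v != 0 -> w != 0 -> a != b -> xw v w != 0.
Proof.
move=> hv hw vn0 wn0 ab; apply/negP => /eqP x0.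
have Y0 : forall p q : 'I_n, Yw v w p q = 0.
  have Y0' : forall p q : 'I_n, (p < q)%N -> Yw v w p q = 0.
    move=> p q pq.
    have := congr1 (fun M : 'rV[F]_#|{: wpairs n}| => M ord0 (enum_rank (exist _ (p, q) pq : wpairs n))) x0.
    by rewrite !mxE enum_rankK.
  move=> p q; case: (ltngtP p q) => h; first exact: Y0'.
    by rewrite /Yw -opprB -/(Yw v w q p) Y0' ?oppr0.
  by move/val_inj: h => ->; rewrite /Yw subrr.
have [p vp] : exists p, v ord0 p != 0.
  apply/existsP; move: vn0; apply: contraR; rewrite negb_exists => /forallP h.
  by apply/eqP/rowP => j; rewrite mxE; move: (h j); rewrite negbK => /eqP.
have wv : w = (w ord0 p / v ord0 p) *: v.
  apply/rowP => j; rewrite !mxE; apply: (mulfI vp).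
  have := Y0 p j; rewrite /Yw => /eqP; rewrite subr_eq0 => /eqP e.
  by rewrite mulrA mulrCA divff // mulr1 e mulrC.
move: hw; rewrite {1}wv -scalemxAl hv scalerA mulrC -scalerA -wv => /eqP.
rewrite -subr_eq0 -scalerBl scaler_eq0 subr_eq0 (negbTE wn0) orbF => /eqP ba.
by move: ab; rewrite ba eqxx.
Qed.
End Wedge.

Lemma compound2_map (R1 R2 : nzRingType) (f : {rmorphism R1 -> R2}) n (M : 'M[R1]_n) :
  compound2 (map_mx f M) = map_mx f (compound2 M).
Proof.
apply/matrixP => a b; rewrite !mxE /compound2_entry rmorphD !rmorph_sum.
by congr (_ + _); apply: eq_bigr => p _; rewrite !mxE rmorphM /wcoef rmorphB !rmorph_nat.
Qed.

Section Cross.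
Variable R : realType.

Lemma unit_ker (F : fieldType) m (A : 'M[F]_m) (v : 'rV[F]_m) :
  A \in unitmx -> v *m A = 0 -> v = 0.
Proof. by move=> Au vA; rewrite -(mulmxK Au v) vA mul0mx. Qed.

Lemma crossing n (M : 'M[R]_n) (z : R[i]) : M \in unitmx -> compound2 M \in unitmx ->
  eigenvalue (cmx M) z -> complex.Re z != 0.
Proof.
move=> Mu Cu /eigenvalueP [v hv vn0].
have cmxE : cmx M = map_mx (real_complex R) M := erefl.
have Mu' : cmx M \in unitmx by rewrite cmxE map_unitmx.
have Cu' : compound2 (cmx M) \in unitmx by rewrite cmxE compound2_map map_unitmx.
apply/negP => /eqP rez.
have [z0|zn0] := eqVneq z 0.
  move: vn0; have -> : v = 0; last by rewrite eqxx.
  by apply: (@unit_ker _ _ _ v Mu'); rewrite hv z0 scale0r.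
pose w := map_mx conjc v.
have cM : map_mx conjc (cmx M) = cmx M.
  by apply/matrixP => i j; rewrite !mxE /= oppr0.
have hw : w *m cmx M = (conjc z) *: w.
  by rewrite /w -cM -map_mxM hv map_mxZ.
have wn0 : w != 0 by rewrite /w map_mx_eq0.
have zz : z != conjc z.
  move: zn0 rez; case: z {hv hw} => x y /= zn0 hx; subst x.
  apply/negP => /eqP [] /eqP.
  rewrite -addr_eq0 -mulr2n mulrn_eq0 /= => /eqP y0; move: zn0; rewrite y0.
  by move/negP; apply; apply/eqP.
have := @xw_eig _ _ _ _ _ _ _ hv hw; rewrite addcJ rez mulr0 scale0r.
move/(@unit_ker _ _ _ _ Cu')/eqP; apply/negP; exact: (@xw_neq0 _ _ _ _ _ _ _ hv hw vn0 wn0 zz).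
Qed.
End Cross.


Section Num.
Variable C : numDomainType.

Lemma prod_diff n (a b : 'I_n -> C) (K d : C) : 1 <= K -> 0 <= d ->
  (forall i, `|a i| <= K) -> (forall i, `|b i| <= K) -> (forall i, `|a i - b i| <= d) ->
  `|\prod_i a i - \prod_i b i| <= n%:R * K ^+ n * d.
Proof.
move=> K1 d0; elim: n a b => [|n IH] a b ha hb hab.
  by rewrite !big_ord0 subrr normr0 mul0r mul0r.
rewrite !big_ord_recr /=.
set A := \prod_(i < n) a (widen_ord _ i); set B := \prod_(i < n) b (widen_ord _ i).
have K0 : 0 <= K by apply: le_trans K1.
have hA : `|A - B| <= n%:R * K ^+ n * d by apply: IH => i.
have hBb : `|B| <= K ^+ n.
  have -> : K ^+ n = \prod_(i < n) K by rewrite prodr_const card_ord.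
  rewrite /B normr_prod.
  by apply: ler_prod => i _; rewrite normr_ge0 hb.
have e : A * a ord_max - B * b ord_max = (A - B) * a ord_max + B * (a ord_max - b ord_max) by ring.
rewrite e; apply: le_trans (ler_normD _ _) _; rewrite !normrM.
have h1 : `|A - B| * `|a ord_max| <= n%:R * K ^+ n * d * K.
  by apply: ler_pM => //; rewrite normr_ge0.
have h2 : `|B| * `|a ord_max - b ord_max| <= K ^+ n * d.
  by apply: ler_pM => //; rewrite normr_ge0.
have h3 : K ^+ n * d <= K ^+ n.+1 * d.
  apply: ler_wpM2r => //; rewrite exprS ler_peMl // exprn_ge0 //.
apply: le_trans (lerD h1 (le_trans h2 h3)) _.
rewrite le_eqVlt; apply/orP; left; apply/eqP; rewrite !exprS mulrSr; ring.
Qed.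

Lemma det_diff n (P Q : 'M[C]_n) (K d : C) : 1 <= K -> 0 <= d ->
  (forall i j, `|P i j| <= K) -> (forall i j, `|Q i j| <= K) ->
  (forall i j, `|P i j - Q i j| <= d) ->
  `|\det P - \det Q| <= n`!%:R * (n%:R * K ^+ n * d).
Proof.
move=> K1 d0 hP hQ hPQ; rewrite /determinant -sumrB.
apply: le_trans (ler_norm_sum _ _ _) _.
apply: le_trans (_ : \sum_(s : {perm 'I_n}) (n%:R * K ^+ n * d) <= _).
  apply: ler_sum => s _; rewrite -mulrBr normrM normr_sign mul1r.
  by apply: prod_diff => // i; rewrite ?hP ?hQ ?hPQ.
by rewrite sumr_const card_Sn [X in _ <= X]mulr_natl.
Qed.

Lemma eig_bound (F : numFieldType) n (A : 'M[F]_n) z a :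
  eigenvalue A z -> (forall i j, `|A i j| <= a) -> `|z| <= n%:R * a.
Proof.
move=> /eigenvalueP [v hv vn0] ha.
pose N := \sum_j `|v ord0 j|.
have N0 : 0 < N.
  rewrite lt0r sumr_ge0 ?andbT => [|j _]; last by rewrite normr_ge0.
  move: vn0; apply: contraNN; rewrite psumr_eq0 => [/allP h|j _]; last by rewrite normr_ge0.
  apply/eqP/rowP => j; rewrite mxE; apply/eqP; rewrite -normr_eq0.
  by apply: h; rewrite mem_index_enum.
have key : `|z| * N <= n%:R * a * N.
  rewrite /N mulr_sumr.
  apply: le_trans (_ : \sum_j \sum_i `|v ord0 i| * a <= _).
    apply: ler_sum => j _; rewrite -normrM.
    have -> : z * v ord0 j = \sum_i v ord0 i * A i j.
      by have := congr1 (fun M : 'rV[F]_n => M ord0 j) hv; rewrite !mxE => <-.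
    apply: le_trans (ler_norm_sum _ _ _) _.
    by apply: ler_sum => i _; rewrite normrM ler_wpM2l ?normr_ge0.
  rewrite exchange_big /= mulr_sumr; apply: ler_sum => i _.
  by rewrite sumr_const card_ord -mulr_natr le_eqVlt; apply/orP; left; apply/eqP; ring.
by rewrite -(ler_pM2r N0).
Qed.
End Num.

Section Cx.
Variable R : realType.
Local Notation C := R[i].
Local Open Scope complex_scope.

Lemma normC_real (x : R) : `|x%:C| = `|x|%:C :> C.
Proof. by rewrite normc_def /= expr0n /= addr0 sqrtr_sqr. Qed.

Lemma re_low (s : R) (z r : C) : `|s| = 1 ->
  (s * complex.Re r - s * complex.Re z)%:C <= `|z - r|.
Proof.
move=> hs; apply: le_trans (normc_ge_Re _); rewrite lecR.
have -> : complex.Re (z - r) = complex.Re z - complex.Re r by case: z; case: r.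
rewrite -mulrBr; apply: le_trans (ler_norm _) _.
by rewrite normrM hs mul1r distrC.
Qed.

Lemma prod_low (rs : seq C) (z : C) (g : C -> R) :
  (forall r, r \in rs -> 0 <= g r /\ (g r)%:C <= `|z - r|) ->
  (\prod_(r <- rs) g r)%:C <= `|\prod_(r <- rs) (z - r)|.
Proof.
move=> h; rewrite rmorph_prod normr_prod big_seq [X in _ <= X]big_seq.
apply: ler_prod => r /h [g0 gl]; by rewrite ler0c g0 gl.
Qed.
End Cx.

Lemma entry_cont (R : realType) n (f : R -> 'M[R]_n) t0 (e : R) :
  {within `[0%R, 1%R], continuous f} -> t0 \in `[0%R, 1%R] -> 0 < e ->
  exists2 d : R, 0 < d & forall t, t \in `[0%R, 1%R] -> `|t0 - t| < d ->
    forall i j, `|f t0 i j - f t i j| < e.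
Proof.
move=> fc t0in e0.
have := (@subspace_continuousP R `[0%R, 1%R]%classic _ f).1 fc t0 t0in.
move/cvg_ball => /(_ e e0).
rewrite /within /= => /nbhs_ballP [d d0 hd].
exists d => // t tin dt i j.
have := hd t dt tin.
by move=> [_ /(_ i j)].
Qed.

Section Key.
Variables (R : realType) (n : nat) (s : R).
Hypothesis hs : `|s| = 1.
Variable f : R -> 'M[R]_n.
Hypothesis fc : {within `[0%R, 1%R], continuous f}.
Hypothesis good : forall t, t \in `[0%R, 1%R] ->
  f t \in unitmx /\ compound2 (f t) \in unitmx.
Local Open Scope complex_scope.

Definition stab (M : 'M[R]_n) :=
  forall z : R[i], eigenvalue (cmx M) z -> 0 < s * complex.Re z.
Definition Dt t (z : R[i]) := \det (z%:M - cmx (f t)).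
Definition Mb t0 := \sum_(ij : 'I_n * 'I_n) `|f t0 ij.1 ij.2|.

Lemma Mb_ge0 t0 : 0 <= Mb t0.
Proof. by apply: sumr_ge0 => ij _; rewrite normr_ge0. Qed.

Lemma Mb_ge t0 i j : `|f t0 i j| <= Mb t0.
Proof.
rewrite /Mb (bigD1 (i, j)) //= lerDl.
by apply: sumr_ge0 => ij _; rewrite normr_ge0.
Qed.

Lemma ent_le (t : R) (w : R[i]) (B M' : R) i j : `|w| <= B%:C ->
  `|f t i j| <= M' -> `|(w%:M - cmx (f t)) i j| <= (B + M')%:C.
Proof.
move=> hw hf; rewrite !mxE complexr0 rmorphD.
apply: le_trans (ler_normB _ _) _; apply: lerD; last by rewrite normC_real lecR.
by case: (i == j); rewrite ?mulr1n ?mulr0n ?normr0 // (le_trans _ hw) ?normr_ge0.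
Qed.

Lemma Qlem t0 (B eta : R) : t0 \in `[0%R, 1%R] -> 0 <= B -> 0 < eta ->
  exists2 d : R, 0 < d & forall t, t \in `[0%R, 1%R] -> `|t0 - t| < d ->
   (forall i j, `|f t i j| <= Mb t0 + 1) /\
   (forall w : R[i], `|w| <= B%:C -> `|Dt t w - Dt t0 w| < eta%:C).
Proof.
move=> t0in B0 eta0.
set K := B + (Mb t0 + 1).
have K1 : 1 <= K by have := Mb_ge0 t0; rewrite /K; lra.
set cst := n`!%:R * (n%:R * K ^+ n).
have cst0 : 0 <= cst by rewrite /cst mulr_ge0 ?mulr_ge0 ?exprn_ge0 ?ler0n //; lra.
set e := Num.min 1 (eta / (cst + 1)).
have e0 : 0 < e by rewrite /e lt_min ltr01 /= divr_gt0 //; lra.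
have e1 : e <= 1 by rewrite /e ge_min lexx.
have e2 : e * (cst + 1) <= eta.
  by rewrite -ler_pdivlMr ?ge_min ?lexx ?orbT //; lra.
have [d d0 hd] := @entry_cont R n f t0 e fc t0in e0.
exists d => // t tin dt; have hdt := hd t tin dt.
have ent : forall i j, `|f t i j| <= Mb t0 + 1.
  move=> i j; have h1 := hdt i j; have h2 := Mb_ge t0 i j.
  have h3 := ler_normD (f t0 i j) (f t i j - f t0 i j).
  rewrite (_ : f t0 i j + (f t i j - f t0 i j) = f t i j) in h3; last by ring.
  rewrite distrC in h1; lra.
split=> // w hw.
rewrite /Dt.
apply: le_lt_trans (@det_diff _ n _ _ K%:C e%:C _ _ _ _ _) _.
- by rewrite -(rmorph1 (real_complex R)) lecR.
- by rewrite ler0c ltW.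
- by move=> i j; apply: ent_le.
- by move=> i j; apply: ent_le => //; apply: le_trans (Mb_ge _ _ _) _; lra.
- move=> i j; rewrite !mxE !complexr0.
  rewrite (_ : _ - _ = (f t0 i j - f t i j)%:C); last by rewrite rmorphB; ring.
  by rewrite normC_real lecR ltW.
rewrite -!(rmorph_nat (real_complex R)) -rmorphXn -!rmorphM ltcR.
have -> : n`!%:R * (n%:R * K ^+ n * e) = cst * e by rewrite /cst; ring.
nra.
Qed.

Lemma prod_const_seq (T : Type) (rs : seq T) (e : R) : \prod_(r <- rs) e = e ^+ size rs.
Proof. by elim: rs => [|x rs IH]; rewrite ?big_nil ?big_cons ?IH ?exprS. Qed.

Lemma open_stab t0 : t0 \in `[0%R, 1%R] -> stab (f t0) ->
  exists2 d : R, 0 < d & forall t, t \in `[0%R, 1%R] -> `|t0 - t| < d -> stab (f t).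
Proof.
move=> t0in st0.
have [rs [_ rsE hD]] := @char_fact _ _ (cmx (f t0)).
set m0 := \prod_(r <- rs) (s * complex.Re r).
have m0p : 0 < m0 by rewrite /m0 big_seq; apply: prodr_gt0 => r /rsE /st0.
set B := n%:R * (Mb t0 + 1).
have B0 : 0 <= B by rewrite /B mulr_ge0 ?ler0n //; have := Mb_ge0 t0; lra.
have [d d0 hd] := @Qlem t0 _ _ t0in B0 m0p.
exists d; first exact: d0.
move=> t tin dt z ez.
have [ent hdiff] := hd t tin dt.
rewrite ltNge; apply/negP => zle.
have zB : `|z| <= B%:C.
  have := @eig_bound _ n (cmx (f t)) z (Mb t0 + 1)%:C ez.
  rewrite /B rmorphM rmorph_nat; apply => i j.
  by rewrite mxE complexr0 normC_real lecR.
have h0 : Dt t z = 0 := @eig_det _ _ _ _ ez.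
have := hdiff z zB; rewrite h0 sub0r normrN /Dt hD.
have low : m0%:C <= `|\prod_(r <- rs) (z - r)|.
  apply: le_trans (@prod_low R rs z (fun r => s * complex.Re r - s * complex.Re z) _).
    rewrite lecR /m0 big_seq [X in _ <= X]big_seq; apply: ler_prod => r /rsE /st0 h.
    apply/andP; split; lra.
  move=> r /rsE /st0 h; split; first lra.
  exact: (@re_low _ _ _ _ hs).
by move=> hlt; move: (lt_le_trans hlt low); rewrite ltxx.
Qed.

Lemma closed_stab t0 : t0 \in `[0%R, 1%R] ->
  (forall d : R, 0 < d -> exists2 t, t \in `[0%R, 1%R] /\ `|t0 - t| < d & stab (f t)) ->
  stab (f t0).
Proof.
move=> t0in hnear z ez.
have [Mu Cu] := good t0 t0in.
have rz := @crossing _ _ _ _ Mu Cu ez.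
rewrite ltNge; apply/negP => zle.
have sn0 : s != 0 by apply/negP => /eqP s0; move: hs; rewrite s0 normr0 => /eqP; rewrite eq_sym oner_eq0.
have zlt : s * complex.Re z < 0 by rewrite lt_neqAle zle mulf_neq0.
set e := - (s * complex.Re z).
have e0 : 0 < e by rewrite /e oppr_gt0.
set B := complex.Re `|z|.
have zB : `|z| = B%:C by rewrite /B normc_def.
have B0 : 0 <= B by rewrite /B normc_def /= sqrtr_ge0.
have [d d0 hd] := @Qlem t0 _ _ t0in B0 (exprn_gt0 n e0).
have [t [tin dt] stt] := hnear d d0.
have [_ hdiff] := hd t tin dt.
have zB2 : `|z| <= B%:C by rewrite zB lexx.
have := hdiff z zB2; rewrite /Dt (@eig_det _ _ _ _ ez) subr0.
have [rs [srs rsE hD]] := @char_fact _ _ (cmx (f t)).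
rewrite hD.
have low : (e ^+ n)%:C <= `|\prod_(r <- rs) (z - r)|.
  rewrite -srs -prod_const_seq; apply: prod_low => r /rsE /stt h; split; first lra.
  by apply: le_trans (@re_low _ _ _ _ hs); rewrite lecR /e; lra.
by move=> hlt; move: (lt_le_trans hlt low); rewrite ltxx.
Qed.

Lemma stab_path : stab (f 0) -> stab (f 1).
Proof.
move=> st0.
have in01 : forall x : R, (x \in `[0%R, 1%R]) = (0 <= x) && (x <= 1) by move=> x; rewrite in_itv.
pose E := [set t : R | t \in `[0%R, 1%R] /\ forall u, u \in `[0%R, 1%R] -> u <= t -> stab (f u)].
have E0 : E 0.
  split; first by rewrite in01 lexx ler01.
  move=> u; rewrite in01 => /andP [u0 _] u0'.
  by have -> : u = 0 by apply/eqP; rewrite eq_le u0 u0'.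
have Eub : ubound E 1 by move=> t [+ _]; rewrite in01 => /andP [].
have hsE : has_sup E by split; [exists 0 | exists 1].
set c := sup E.
have c0 : 0 <= c by apply: sup_upper_bound.
have c1 : c <= 1 by apply: sup_le_ub => //; exists 0.
have cin : c \in `[0%R, 1%R] by rewrite in01 c0 c1.
have stc : stab (f c).
  apply: closed_stab => // d d0.
  have [t [tin tall] ct] := sup_adherent d0 hsE.
  exists t; last by apply: tall => //.
  split => //; have := sup_upper_bound hsE (x := t); rewrite -/c => /(_ (conj tin tall)) tc.
  rewrite -/c in ct; rewrite ger0_norm; lra.
have [d d0 hd] := @open_stab c cin stc.
have [t [tin tall] ct] := sup_adherent d0 hsE.
rewrite -/c in ct.
pose t1 := Num.min 1 (c + d / 2).
have t1in : t1 \in `[0%R, 1%R].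
  rewrite in01 /t1 ge_min lexx /= le_min ler01 /=; lra.
have Et1 : E t1.
  split; first exact: t1in.
  move=> u uin ut1.
  have [uc|uc] := lerP u (c - d).
    by apply: tall => //; lra.
  apply: hd => //.
  have : u <= c + d / 2 by apply: le_trans ut1 _; rewrite /t1 ge_min lexx orbT.
  move=> h; rewrite ltr_norml; apply/andP; split; lra.
have : t1 <= c by apply: sup_upper_bound.
rewrite /t1 ge_min => /orP [h1|h2]; last lra.
have -> : 1 = c by apply/eqP; rewrite eq_le h1 c1.
exact: stc.
Qed.
End Key.

Theorem lemma2p6 (R : realType) (n : nat) (S : set 'M[R]_n) :
  (2 <= n)%N ->
  path_connected S ->
  (forall M : 'M[R]_n, S M -> M \in unitmx /\ compound2 M \in unitmx) ->
  ((exists M : 'M[R]_n, S M /\ positive_stable M) ->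
     forall M : 'M[R]_n, S M -> positive_stable M) /\
  ((exists M : 'M[R]_n, S M /\ hurwitz M) ->
     forall M : 'M[R]_n, S M -> hurwitz M).
Proof.
move=> _ pc hS.
have gen : forall s : R, `|s| = 1 -> forall M0 M, S M0 -> S M ->
    @stab R n s M0 -> @stab R n s M.
  move=> s hs M0 M SM0 SM st0.
  have [g [gc [g0 [g1 gin]]]] := pc M0 M SM0 SM.
  have good : forall t, t \in `[0%R, 1%R] -> g t \in unitmx /\ compound2 (g t) \in unitmx.
    by move=> t tin; apply: hS; apply: gin.
  rewrite -g1; apply: (@stab_path R n s hs g gc good); by rewrite g0.
split.
  move=> [M0 [SM0 st0]] M SM z ez.
  have := gen 1 (normr1 _) M0 M SM0 SM _ z ez; rewrite mul1r; apply.
  by move=> w ew; rewrite mul1r; apply: st0.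
move=> [M0 [SM0 st0]] M SM z ez.
have := gen (-1) (normrN1 _) M0 M SM0 SM _ z ez; rewrite mulN1r oppr_gt0; apply.
by move=> w ew; rewrite mulN1r oppr_gt0; apply: st0.
Qed.
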